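(* Let $\Omega_n=\dfrac{\pi^{n/2}}{\Gamma\left(\frac n2+1\right)}$ for $n\in\mathbb{N}_0$, and \[ r(n)=1+\frac1{2n}-\frac3{8n^2}+\frac3{16n^3},\qquad s(n)=r(n)+\frac3{128n^4}. \] Then $r(n)<\frac{\Omega_n^2}{\Omega_{n-1}\Omega_{n+1}}$ for every integer $n\ge6$, and $\frac{\Omega_n^2}{\Omega_{n-1}\Omega_{n+1}}<s(n)$ for every integer $n\ge1$.
   Context: $\Omega_n$ is the volume of the unit ball in $\mathbb{R}^n$ ($\Omega_0=1$); $\Gamma$ is Euler's gamma function. *)

(* Defs.v *)
From Stdlib Require Import Reals.
From Coquelicot Require Import Coquelicot.
Open Scope R_scope.

Definition Gamma (x : R) : R :=
  RInt_gen (fun t => Rpower t (x - 1) * exp (- t)) (at_right 0) (Rbar_locally p_infty).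

Definition Omega (n : nat) : R :=
  Rpower PI (INR n / 2) / Gamma (INR n / 2 + 1).

Definition r_fun (n : nat) : R :=
  1 + 1 / (2 * INR n) - 3 / (8 * INR n ^ 2) + 3 / (16 * INR n ^ 3).

Definition s_fun (n : nat) : R := r_fun n + 3 / (128 * INR n ^ 4).

Definition omega_ratio (n : nat) : R :=
  Omega n ^ 2 / (Omega (n - 1) * Omega (n + 1)).

(* Main.v *)
Require Import Defs.
From Stdlib Require Import Reals Lra Lia Classical.
From Coquelicot Require Import Coquelicot.
Open Scope R_scope.

Definition fg (x t : R) : R := Rpower t (x - 1) * exp (- t).

Lemma ballR x e y : ball x e y <-> Rabs (y - x) < e.
Proof. split; intro H; exact H. Qed.

Lemma exp_le_mono a b : a <= b -> exp a <= exp b.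
Proof. intro H; destruct (Rle_lt_or_eq_dec _ _ H) as [H'|H'].
  left; now apply exp_increasing. subst; lra. Qed.

Lemma is_derive_Rpower y t : 0 < t -> is_derive (fun u => Rpower u y) t (y * Rpower t (y-1)).
Proof. intro; apply is_derive_Reals; apply derivable_pt_lim_power; auto. Qed.

Lemma cont_Rpower y t : 0 < t -> continuous (fun u => Rpower u y) t.
Proof. intro; apply (ex_derive_continuous (K:=R_AbsRing) (V:=R_NormedModule) (fun u => Rpower u y)); eexists; apply is_derive_Rpower; auto. Qed.

Lemma cont_fg x t : 0 < t -> continuous (fg x) t.
Proof. intro. unfold fg.
  apply (continuous_mult (fun u => Rpower u (x-1)) (fun u => exp (-u))).
  apply cont_Rpower; auto.
  apply continuous_exp_comp. apply (ex_derive_continuous (K:=R_AbsRing) (V:=R_NormedModule) (fun u => - u)); auto_derive; auto. Qed.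

Lemma fg_pos x t : 0 < fg x t.
Proof. unfold fg, Rpower. apply Rmult_lt_0_compat; apply exp_pos. Qed.

Lemma at_right_lt (a0 : R) : 0 < a0 -> at_right 0 (fun a => 0 < a < a0).
Proof. intro H. exists (mkposreal a0 H). intros y Hy Hp. apply ballR in Hy. simpl in Hy.
  split; auto. assert (Hy2 : Rabs (y - 0) < a0) by exact Hy. rewrite Rminus_0_r, Rabs_right in Hy2; lra. Qed.

Lemma RInt_gen_sup (f : R -> R) (M : R) :
  (forall t, 0 < t -> continuous f t) ->
  (forall t, 0 < t -> 0 <= f t) ->
  (forall a b, 0 < a -> a < b -> RInt f a b <= M) ->
  exists L, is_RInt_gen f (at_right 0) (Rbar_locally p_infty) L /\ RInt f 1 2 <= L.
Proof.
  intros Hc Hp HM.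
  assert (exRI : forall a b, 0 < a -> 0 < b -> ex_RInt f a b).
  { intros a b Ha Hb. apply (ex_RInt_continuous (V:=R_CompleteNormedModule)). intros z Hz. apply Hc.
    apply Rlt_le_trans with (Rmin a b); [apply Rmin_glb_lt; auto | tauto]. }
  assert (Hge : forall a b, 0 < a -> a <= b -> 0 <= RInt f a b).
  { intros a b Ha Hab. apply RInt_ge_0; auto. apply exRI; lra.
    intros z Hz; apply Hp; lra. }
  set (E := fun z => exists a b, 0 < a /\ a < b /\ z = RInt f a b).
  assert (HE : bound E). { exists M. intros z [a [b [H1 [H2 ->]]]]. apply HM; auto. }
  assert (HE2 : E (RInt f 1 2)). { exists 1, 2. repeat split; lra. }
  destruct (completeness E HE (ex_intro _ _ HE2)) as [L [HL1 HL2]].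
  exists L. split; [| apply HL1; auto].
  unfold is_RInt_gen. apply filterlimi_locally. intro eps.
  assert (Hex : exists a0 b0, 0 < a0 /\ a0 < b0 /\ L - eps < RInt f a0 b0).
  { apply NNPP. intro Hn.
    assert (Hub : is_upper_bound E (L - eps)).
    { intros z [a [b [H1 [H2 ->]]]]. apply Rnot_lt_le. intro Hlt. apply Hn.
      exists a, b. auto. }
    pose proof (HL2 _ Hub). pose proof (cond_pos eps). lra. }
  destruct Hex as [a0 [b0 [Ha0 [Hab0 Hlt]]]].
  apply (Filter_prod _ _ _ (fun a => 0 < a < a0) (fun b => b0 < b)).
  - apply at_right_lt; auto.
  - exists b0; auto.
  - intros a b [Ha Ha'] Hb. exists (RInt f a b). split.
    + apply (RInt_correct (V:=R_CompleteNormedModule)), exRI; lra.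
    + apply ballR. simpl.
      assert (Hup : RInt f a b <= L). { apply HL1. exists a, b. split; [lra|split; [lra|reflexivity]]. }
      assert (H1 := RInt_Chasles f a a0 b (exRI a a0 Ha Ha0) (exRI a0 b Ha0 ltac:(lra))).
      assert (H2 := RInt_Chasles f a0 b0 b (exRI a0 b0 Ha0 ltac:(lra)) (exRI b0 b ltac:(lra) ltac:(lra))).
      simpl in H1, H2. unfold plus in H1, H2; simpl in H1, H2.
      pose proof (Hge a a0 Ha ltac:(lra)). pose proof (Hge b0 b ltac:(lra) ltac:(lra)).
      apply Rabs_def1; lra.
Qed.


Lemma exRI_fg x a b : 0 < a -> 0 < b -> ex_RInt (fg x) a b.
Proof. intros Ha Hb. apply (ex_RInt_continuous (V:=R_CompleteNormedModule)).
  intros z Hz. apply cont_fg.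
  apply Rlt_le_trans with (Rmin a b); [apply Rmin_glb_lt; auto | tauto]. Qed.

Lemma RInt_fg_ge0 x a b : 0 < a -> a <= b -> 0 <= RInt (fg x) a b.
Proof. intros Ha Hab. apply RInt_ge_0; auto. apply exRI_fg; lra.
  intros z Hz; left; apply fg_pos. Qed.

Lemma Rpower_1_l y : Rpower 1 y = 1.
Proof. unfold Rpower; rewrite ln_1, Rmult_0_r, exp_0; auto. Qed.

Lemma fg_bound x a b : /2 <= x <= 1 -> 0 < a -> a < b -> RInt (fg x) a b <= 3.
Proof.
  intros Hx Ha Hab.
  set (a' := Rmin a 1). set (b' := Rmax b 1).
  assert (Ha1 : a' <= a) by apply Rmin_l.
  assert (Ha2 : a' <= 1) by apply Rmin_r.
  assert (Ha3 : 0 < a') by (apply Rmin_glb_lt; lra).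
  assert (Hb1 : b <= b') by apply Rmax_l.
  assert (Hb2 : 1 <= b') by apply Rmax_r.
  assert (C1 := RInt_Chasles (fg x) a' a b' (exRI_fg x a' a Ha3 Ha) (exRI_fg x a b' Ha ltac:(lra))).
  assert (C2 := RInt_Chasles (fg x) a b b' (exRI_fg x a b Ha ltac:(lra)) (exRI_fg x b b' ltac:(lra) ltac:(lra))).
  assert (C3 := RInt_Chasles (fg x) a' 1 b' (exRI_fg x a' 1 Ha3 ltac:(lra)) (exRI_fg x 1 b' ltac:(lra) ltac:(lra))).
  simpl in C1, C2, C3; unfold plus in C1, C2, C3; simpl in C1, C2, C3.
  pose proof (RInt_fg_ge0 x a' a Ha3 Ha1).
  pose proof (RInt_fg_ge0 x b b' ltac:(lra) Hb1).
  assert (I1 : RInt (fg x) a' 1 <= 2).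
  { assert (Hd : forall t, 0 < t -> is_derive (fun u => 2 * Rpower u (/2)) t (Rpower t (-/2))).
    { intros t Ht. replace (Rpower t (-/2)) with (2 * (/2 * Rpower t (/2 - 1))).
      apply is_derive_scal. apply is_derive_Rpower; auto.
      replace (/2 - 1) with (-/2) by field. field. }
    assert (Hi : is_RInt (fun t => Rpower t (-/2)) a' 1 (minus (2 * Rpower 1 (/2)) (2 * Rpower a' (/2)))).
    { apply (is_RInt_derive (V:=R_CompleteNormedModule) (fun u => 2 * Rpower u (/2))).
      - intros z Hz. apply Hd. rewrite Rmin_left in Hz; lra.
      - intros z Hz. apply cont_Rpower. rewrite Rmin_left in Hz; lra. }
    apply Rle_trans with (RInt (fun t => Rpower t (-/2)) a' 1).
    - apply RInt_le; auto. apply exRI_fg; lra. eexists; exact Hi.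
      intros t Ht. unfold fg, Rpower.
      assert (Hl : ln t < 0) by (rewrite <- ln_1; apply ln_increasing; lra).
      assert (E1 : exp (- t) <= 1) by (rewrite <- exp_0; apply exp_le_mono; lra).
      assert (E2 : exp ((x - 1) * ln t) <= exp (- / 2 * ln t)) by (apply exp_le_mono; nra).
      pose proof (exp_pos ((x - 1) * ln t)). pose proof (exp_pos (-t)). nra.
    - rewrite (is_RInt_unique _ _ _ _ Hi). rewrite Rpower_1_l.
      unfold minus, plus, opp; simpl. unfold Rpower at 1. pose proof (exp_pos (/ 2 * ln a')). lra. }
  assert (I2 : RInt (fg x) 1 b' <= 1).
  { assert (Hi : is_RInt (fun t => exp (- t)) 1 b' (minus (- exp (- b')) (- exp (- 1)))).
    { apply (is_RInt_derive (V:=R_CompleteNormedModule) (fun u => - exp (- u))).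
      - intros z Hz. auto_derive; auto. ring.
      - intros z Hz. apply continuous_exp_comp.
        apply (ex_derive_continuous (K:=R_AbsRing) (V:=R_NormedModule) (fun u => - u)); auto_derive; auto. }
    apply Rle_trans with (RInt (fun t => exp (- t)) 1 b').
    - apply RInt_le; auto. apply exRI_fg; lra. eexists; exact Hi.
      intros t Ht. unfold fg, Rpower.
      assert (Hl : 0 < ln t) by (rewrite <- ln_1; apply ln_increasing; lra).
      assert (E2 : exp ((x - 1) * ln t) <= 1) by (apply Rle_trans with (exp 0); [apply exp_le_mono; nra | rewrite exp_0; lra]).
      pose proof (exp_pos ((x - 1) * ln t)). pose proof (exp_pos (-t)). nra.
    - rewrite (is_RInt_unique _ _ _ _ Hi). unfold minus, plus, opp; simpl.
      assert (exp (-1) <= 1) by (apply Rle_trans with (exp 0); [apply exp_le_mono; lra | rewrite exp_0; lra]).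
      pose proof (exp_pos (- b')). lra. }
  lra.
Qed.

Lemma Gamma_base x : /2 <= x <= 1 ->
  exists L, is_RInt_gen (fg x) (at_right 0) (Rbar_locally p_infty) L /\ 0 < L.
Proof.
  intro Hx. destruct (RInt_gen_sup (fg x) 3) as [L [HL HL2]].
  - intros; apply cont_fg; auto.
  - intros; left; apply fg_pos.
  - intros; apply fg_bound; auto.
  - exists L; split; auto.
    assert (H := RInt_lt (fun _ => 0) (fg x) 1 2 ltac:(lra)).
    rewrite RInt_const in H. unfold scal in H; simpl in H; unfold mult in H; simpl in H.
    assert (0 < RInt (fg x) 1 2).
    { replace 0 with ((2-1)*0) by ring. apply H.
      - intros; apply cont_fg; lra.
      - intros; apply continuous_const.
      - intros; apply fg_pos. }
    lra.
Qed.


Lemma fg_S x t : fg (x+1) t = exp (x * ln t - t).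
Proof. unfold fg, Rpower. rewrite <- exp_plus. f_equal. ring. Qed.

Lemma fg_x x t : 0 < t -> fg x t = exp (x * ln t - t) / t.
Proof. intro Ht. unfold fg, Rpower.
  replace (exp (x*ln t - t)) with (exp ((x-1)*ln t) * exp(-t) * exp (ln t))
    by (rewrite <- !exp_plus; f_equal; ring).
  rewrite exp_ln by auto. field; lra. Qed.

Lemma Hpos_prod : filter_prod (at_right 0) (Rbar_locally p_infty) (fun ab => 0 < fst ab /\ 0 < snd ab).
Proof. apply (Filter_prod _ _ _ (fun a => 0 < a) (fun b => 0 < b)).
    - exists (mkposreal 1 Rlt_0_1). intros; auto.
    - exists 0; auto.
    - intros; simpl; auto. Qed.

Lemma lim_h0 x : 0 < x -> filterlim (fun u => - exp (x * ln u - u)) (at_right 0) (locally 0).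
Proof.
  intro Hx. apply filterlim_locally. intro eps.
  assert (Hd : 0 < Rpower eps (/x)) by apply exp_pos.
  exists (mkposreal _ Hd). intros t Ht Htp. apply ballR in Ht. apply ballR. simpl in *.
  assert (Ht2 : Rabs (t - 0) < Rpower eps (/ x)) by exact Ht.
  rewrite Rminus_0_r, Rabs_right in Ht2 by lra.
  replace (- exp (x * ln t - t) - 0) with (- exp (x * ln t - t)) by ring.
  rewrite Rabs_Ropp, Rabs_right by (left; apply exp_pos).
  apply Rle_lt_trans with (exp (x * ln t)). apply exp_le_mono; lra.
  change (Rpower t x < eps).
  apply Rlt_le_trans with (Rpower (Rpower eps (/x)) x).
  apply Rlt_Rpower_l; auto.
  rewrite Rpower_mult. replace (/x * x) with 1 by (field; lra). rewrite Rpower_1. lra.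
  apply cond_pos.
Qed.

Lemma lim_hinf x : 0 < x -> filterlim (fun u => - exp (x * ln u - u)) (Rbar_locally p_infty) (locally 0).
Proof.
  intro Hx.
  assert (H : filterlim (fun y => ln y / y) (Rbar_locally p_infty) (locally 0)) by exact is_lim_div_ln_p.
  apply filterlim_locally. intro eps.
  assert (Hd : 0 < / (2 * x)) by (apply Rinv_0_lt_compat; lra).
  destruct (proj1 (filterlim_locally _ _) H (mkposreal _ Hd)) as [M HM].
  exists (Rmax (Rmax M 1) (-2 * ln eps)). intros t Ht.
  assert (Ht1 : M < t) by (eapply Rle_lt_trans; [|exact Ht]; eapply Rle_trans; [apply Rmax_l|apply Rmax_l]).
  assert (Ht2 : 1 < t) by (eapply Rle_lt_trans; [|exact Ht]; eapply Rle_trans; [apply Rmax_r|apply Rmax_l]).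
  assert (Ht3 : -2 * ln eps < t) by (eapply Rle_lt_trans; [|exact Ht]; apply Rmax_r).
  specialize (HM t Ht1). apply ballR in HM. simpl in HM.
  assert (HM2 : Rabs (ln t / t - 0) < / (2 * x)) by exact HM.
  rewrite Rminus_0_r in HM2. apply Rabs_def2 in HM2. destruct HM2 as [HM2 _].
  assert (Hlt : x * ln t < t / 2).
  { assert (ln t < t * / (2*x)).
    { apply (Rmult_lt_reg_r (/t)). apply Rinv_0_lt_compat; lra.
      replace (t * / (2 * x) * / t) with (/ (2*x)) by (field; lra). exact HM2. }
    apply (Rmult_lt_reg_r (/x)). apply Rinv_0_lt_compat; lra.
    replace (x * ln t * / x) with (ln t) by (field; lra).
    replace (t / 2 * / x) with (t * / (2 * x)) by (field; lra). auto. }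
  apply ballR. simpl.
  replace (- exp (x * ln t - t) - 0) with (- exp (x * ln t - t)) by ring.
  rewrite Rabs_Ropp, Rabs_right by (left; apply exp_pos).
  rewrite <- (exp_ln eps) by apply cond_pos. apply exp_increasing. lra.
Qed.

Lemma Gamma_step x L : 0 < x ->
  is_RInt_gen (fg x) (at_right 0) (Rbar_locally p_infty) L ->
  is_RInt_gen (fg (x+1)) (at_right 0) (Rbar_locally p_infty) (x * L).
Proof.
  intros Hx HL.
  set (h := fun u => - exp (x * ln u - u)).
  set (dh := fun u => fg (x+1) u - x * fg x u).
  assert (Hd : forall t, 0 < t -> is_derive h t (dh t)).
  { intros t Ht. unfold h, dh. auto_derive. auto. rewrite fg_S, (fg_x x t Ht). replace (x * ln t + - t) with (x * ln t - t) by ring. field. lra. }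
  assert (HD : forall t, 0 < t -> Derive h t = dh t) by (intros; apply is_derive_unique; auto).
  assert (Hcd : forall t, 0 < t -> continuous dh t).
  { intros t Ht. unfold dh.
    apply (continuous_minus (fg (x+1)) (fun u => scal x (fg x u))).
    apply cont_fg; auto. apply (continuous_scal_r (U:=R_UniformSpace) (K:=R_AbsRing) (V:=R_NormedModule)). apply cont_fg; auto. }
  assert (Hmin : forall a b z, 0 < a -> 0 < b -> Rmin a b <= z -> 0 < z).
  { intros a b z Ha Hb Hz. pose proof (Rmin_glb_lt a b 0 Ha Hb). lra. }
  assert (H0 : is_RInt_gen (Derive h) (at_right 0) (Rbar_locally p_infty) (0 - 0)).
  { apply is_RInt_gen_Derive.
    - eapply filter_imp; [|exact Hpos_prod]. intros [a b] [Ha Hb] z Hz; simpl in *.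
      eexists; apply Hd. eapply Hmin; [exact Ha|exact Hb|apply Hz].
    - eapply filter_imp; [|exact Hpos_prod]. intros [a b] [Ha Hb] z Hz; simpl in *.
      assert (Hz' : 0 < z) by (eapply Hmin; [exact Ha|exact Hb|apply Hz]).
      apply (continuous_ext_loc _ dh). eapply filter_imp; [|apply (open_gt 0 z Hz')].
      intros y Hy; symmetry; apply HD; auto. apply Hcd; auto.
    - apply lim_h0; auto.
    - apply lim_hinf; auto. }
  assert (H1 : is_RInt_gen dh (at_right 0) (Rbar_locally p_infty) (0 - 0)).
  { eapply is_RInt_gen_ext; [|exact H0].
    eapply filter_imp; [|exact Hpos_prod]. intros [a b] [Ha Hb] z Hz; simpl in *.
    apply HD. eapply Hmin; [exact Ha|exact Hb|left; apply Hz]. }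
  assert (H3 := is_RInt_gen_plus _ _ _ _ H1 (is_RInt_gen_scal _ x _ HL)).
  replace (x * L) with (plus (0 - 0) (scal x L)).
  2: { unfold plus, scal; simpl; unfold mult; simpl; ring. }
  eapply is_RInt_gen_ext; [|exact H3].
  apply filter_forall. intros ab z _. unfold dh, plus, scal; simpl; unfold mult; simpl; ring.
Qed.

Lemma logconv (x L0 L1 L2 : R) : 0 < x ->
  is_RInt_gen (fg x) (at_right 0) (Rbar_locally p_infty) L0 ->
  is_RInt_gen (fg (x + /2)) (at_right 0) (Rbar_locally p_infty) L1 ->
  is_RInt_gen (fg (x + 1)) (at_right 0) (Rbar_locally p_infty) L2 ->
  0 < L0 -> 0 < L2 -> L1 ^ 2 <= L0 * L2.
Proof.
  intros Hx H0 H1 H2 P0 P2.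
  set (a := sqrt (L2 / L0)).
  assert (Ha : 0 < a) by (apply sqrt_lt_R0; apply Rdiv_lt_0_compat; auto).
  assert (Ha2 : a * a = L2 / L0) by (apply sqrt_sqrt; left; apply Rdiv_lt_0_compat; auto).
  assert (HG := is_RInt_gen_scal _ (/2) _ (is_RInt_gen_plus _ _ _ _ (is_RInt_gen_scal _ a _ H0) (is_RInt_gen_scal _ (/a) _ H2))).
  assert (Hle : filter_prod (at_right 0) (Rbar_locally p_infty) (fun ab => fst ab <= snd ab)).
  { apply (Filter_prod _ _ _ (fun a => 0 < a < 1) (fun b => 1 < b)).
    apply at_right_lt; lra. exists 1; auto. intros; simpl; lra. }
  assert (Hpt : filter_prod (at_right 0) (Rbar_locally p_infty) (fun ab => forall t, fst ab <= t <= snd ab ->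
     norm (fg (x + /2) t) <= scal (/2) (plus (scal a (fg x t)) (scal (/a) (fg (x+1) t))))).
  { eapply filter_imp; [|exact Hpos_prod]. intros [a0 b0] [Ha0 Hb0] t Ht; simpl in *.
    unfold scal, plus; simpl; unfold mult; simpl. unfold norm; simpl; unfold abs; simpl.
    pose proof (fg_pos (x + /2) t). pose proof (fg_pos x t). pose proof (fg_pos (x+1) t).
    rewrite Rabs_right by lra.
    assert (Hw : fg (x + /2) t * fg (x + /2) t = fg x t * fg (x+1) t).
    { unfold fg, Rpower. rewrite <- !exp_plus. apply (f_equal exp). field. }
    set (w := fg (x + /2) t) in *. set (u := fg x t) in *. set (v := fg (x+1) t) in *.
    assert (Hk : u * (a*a*u + v - 2*a*w) >= 0) by (pose proof (pow2_ge_0 (a*u - w)); nra).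
    assert (Hk2 : a*a*u + v - 2*a*w >= 0).
    { destruct (Rge_gt_dec (a*a*u + v - 2*a*w) 0); auto. nra. }
    assert (Hk3 : w <= / 2 * (a * u + / a * v)).
    { apply (Rmult_le_reg_l (2*a)). lra.
      replace (2 * a * (/ 2 * (a * u + / a * v))) with (a*a*u + v) by (field; lra). lra. }
    exact Hk3. }
  assert (Hn := RInt_gen_norm (fg (x + /2)) _ L1 _ Hle Hpt H1 HG).
  unfold scal, plus in Hn; simpl in Hn; unfold mult in Hn; simpl in Hn.
  unfold norm in Hn; simpl in Hn; unfold abs in Hn; simpl in Hn.
  assert (HL2 : L2 = a * a * L0) by (rewrite Ha2; field; lra).
  replace (/ 2 * (a * L0 + / a * L2)) with (a * L0) in Hn by (rewrite HL2; field; lra).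
  pose proof (Rabs_pos L1).
  replace (L1 ^ 2) with (Rabs L1 * Rabs L1) by (rewrite <- Rabs_mult; simpl; rewrite Rmult_1_r; apply Rabs_right; nra).
  rewrite HL2. nra.
Qed.


Definition okG x := exists L, is_RInt_gen (fg x) (at_right 0) (Rbar_locally p_infty) L /\ 0 < L.

Lemma Gamma_eq x L : is_RInt_gen (fg x) (at_right 0) (Rbar_locally p_infty) L -> Gamma x = L.
Proof. intro H. unfold Gamma. apply is_RInt_gen_unique. exact H. Qed.

Definition gs (n : nat) := Gamma (INR n / 2 + /2).

Lemma ok_all : forall n, okG (INR n / 2 + /2) /\ okG (INR (S n) / 2 + /2).
Proof.
  induction n as [|n [IH1 IH2]].
  - split; apply Gamma_base; simpl; lra.
  - split; auto.
    destruct IH1 as [L [HL HLp]].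
    assert (Hx : 0 < INR n / 2 + /2) by (pose proof (pos_INR n); lra).
    exists ((INR n / 2 + /2) * L). split.
    + replace (INR (S (S n)) / 2 + /2) with ((INR n / 2 + /2) + 1) by (rewrite !S_INR; field).
      apply Gamma_step; auto.
    + apply Rmult_lt_0_compat; auto.
Qed.

Lemma gs_ok n : is_RInt_gen (fg (INR n / 2 + /2)) (at_right 0) (Rbar_locally p_infty) (gs n) /\ 0 < gs n.
Proof. destruct (proj1 (ok_all n)) as [L [HL HLp]]. unfold gs. rewrite (Gamma_eq _ _ HL). auto. Qed.

Lemma gs_pos n : 0 < gs n.
Proof. apply gs_ok. Qed.

Lemma gs_rec n : gs (S (S n)) = (INR n / 2 + /2) * gs n.
Proof.
  destruct (gs_ok n) as [H _].
  assert (Hx : 0 < INR n / 2 + /2) by (pose proof (pos_INR n); lra).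
  pose proof (Gamma_step _ _ Hx H) as H2.
  unfold gs at 1. replace (INR (S (S n)) / 2 + /2) with ((INR n / 2 + /2) + 1) by (rewrite !S_INR; field).
  apply Gamma_eq; auto.
Qed.

Lemma gs_lc n : gs (S n) ^ 2 <= gs n * gs (S (S n)).
Proof.
  destruct (gs_ok n) as [H0 P0]. destruct (gs_ok (S n)) as [H1 P1]. destruct (gs_ok (S (S n))) as [H2 P2].
  assert (Hx : 0 < INR n / 2 + /2) by (pose proof (pos_INR n); lra).
  apply (logconv (INR n / 2 + /2)); auto.
  - replace (INR n / 2 + / 2 + / 2) with (INR (S n) / 2 + /2) by (rewrite !S_INR; field). auto.
  - replace (INR n / 2 + / 2 + 1) with (INR (S (S n)) / 2 + /2) by (rewrite !S_INR; field). auto.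
Qed.

Definition Rn (n : nat) := gs n * gs (S (S n)) / gs (S n) ^ 2.

Lemma Rn_ge1 n : 1 <= Rn n.
Proof. unfold Rn. pose proof (gs_lc n). pose proof (gs_pos (S n)).
  apply (Rmult_le_reg_r (gs (S n) ^ 2)). apply pow_lt; auto.
  unfold Rdiv. rewrite Rmult_assoc, Rinv_l, Rmult_1_r, Rmult_1_l. lra.
  apply pow_nonzero; lra. Qed.

Lemma Rn_pos n : 0 < Rn n.
Proof. pose proof (Rn_ge1 n); lra. Qed.

Definition cc (n : nat) := (INR n + 2) / (INR n + 1).

Lemma Rn_mul n : Rn n * Rn (S n) = cc n.
Proof. unfold Rn, cc. rewrite (gs_rec (S n)), (gs_rec n).
  pose proof (gs_pos n). pose proof (gs_pos (S n)). pose proof (pos_INR n).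
  rewrite S_INR. field. repeat split; lra. Qed.

Lemma Rn_step n : Rn (S (S n)) = Rn n * (cc (S n) / cc n).
Proof. pose proof (Rn_mul n). pose proof (Rn_mul (S n)). pose proof (Rn_pos n). pose proof (Rn_pos (S n)).
  assert (0 < cc n) by (unfold cc; pose proof (pos_INR n); apply Rdiv_lt_0_compat; lra).
  apply (Rmult_eq_reg_l (Rn (S n))); [|lra].
  rewrite H0. rewrite <- H. field. lra. Qed.

Lemma omega_Rn n : (1 <= n)%nat -> omega_ratio n = Rn n.
Proof.
  intro Hn. unfold omega_ratio, Omega, Rn, gs.
  assert (E1 : INR (n - 1) = INR n - 1) by (rewrite minus_INR; simpl; auto).
  replace (INR (n - 1) / 2 + 1) with (INR n / 2 + /2) by (rewrite E1; field).
  replace (INR n / 2 + 1) with (INR (S n) / 2 + /2) by (rewrite S_INR; field).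
  replace (INR (n + 1) / 2 + 1) with (INR (S (S n)) / 2 + /2) by (rewrite plus_INR, !S_INR; simpl; field).
  assert (HP : Rpower PI (INR n / 2) ^ 2 = Rpower PI (INR (n-1) / 2) * Rpower PI (INR (n+1) / 2)).
  { simpl. rewrite Rmult_1_r. rewrite <- !Rpower_plus. f_equal. rewrite E1, plus_INR. simpl. field. }
  assert (0 < Rpower PI (INR (n-1) / 2)) by apply exp_pos.
  assert (HPb : Rpower PI (INR (n+1) / 2) = Rpower PI (INR n / 2) ^ 2 / Rpower PI (INR (n-1) / 2)).
  { rewrite HP. field. lra. }
  rewrite HPb.
  assert (0 < Rpower PI (INR n / 2)) by apply exp_pos.
  pose proof (gs_pos n) as P0. pose proof (gs_pos (S n)) as P1. pose proof (gs_pos (S (S n))) as P2.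
  unfold gs in P0, P1, P2.
  field. repeat split; lra.
Qed.


Definition rR (m : R) := 1 + 1 / (2 * m) - 3 / (8 * m ^ 2) + 3 / (16 * m ^ 3).
Definition sR (m : R) := rR m + 3 / (128 * m ^ 4).

Lemma PU m : 1 <= m -> (m+2)/(m+1) * sR (m+2) < (m+3)/(m+2) * sR m.
Proof. intro Hm.
  assert (E : (m+3)/(m+2) * sR m - (m+2)/(m+1) * sR (m+2) =
              (165*m^2+372*m+36)/(128*m^4*(m+2)^3*(m+1))).
  { unfold sR, rR. field. lra. }
  assert (0 < (165*m^2+372*m+36)/(128*m^4*(m+2)^3*(m+1))).
  { apply Rdiv_lt_0_compat. nra.
    repeat apply Rmult_lt_0_compat; try apply pow_lt; lra. }
  lra. Qed.

Lemma PL m : 6 <= m -> (m+3)/(m+2) * rR m <= (m+2)/(m+1) * rR (m+2).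
Proof. intro Hm.
  assert (E : (m+2)/(m+1) * rR (m+2) - (m+3)/(m+2) * rR m =
              (3*m-18)/(16*m^3*(m+2)^2*(m+1))).
  { unfold rR. field. lra. }
  assert (0 <= (3*m-18)/(16*m^3*(m+2)^2*(m+1))).
  { apply Rdiv_le_0_compat. lra.
    repeat apply Rmult_lt_0_compat; try apply pow_lt; lra. }
  lra. Qed.

Lemma PL' m : 6 < m -> (m+3)/(m+2) * rR m < (m+2)/(m+1) * rR (m+2).
Proof. intro Hm.
  assert (E : (m+2)/(m+1) * rR (m+2) - (m+3)/(m+2) * rR m =
              (3*m-18)/(16*m^3*(m+2)^2*(m+1))).
  { unfold rR. field. lra. }
  assert (0 < (3*m-18)/(16*m^3*(m+2)^2*(m+1))).
  { apply Rdiv_lt_0_compat. lra.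
    repeat apply Rmult_lt_0_compat; try apply pow_lt; lra. }
  lra. Qed.

Lemma rR_ge1 m : 1 <= m -> 1 <= rR m.
Proof. intro Hm. unfold rR.
  assert (E : 1 / (2 * m) - 3 / (8 * m ^ 2) + 3 / (16 * m ^ 3) = (8*m^2 - 6*m + 3)/(16*m^3)) by (field; lra).
  assert (0 <= (8*m^2 - 6*m + 3)/(16*m^3)).
  { apply Rdiv_le_0_compat. nra. apply Rmult_lt_0_compat; [lra|apply pow_lt; lra]. }
  lra. Qed.

Lemma rR_le m : 1 <= m -> rR m <= 1 + 1 / m.
Proof. intro Hm. unfold rR.
  assert (E : 1 + 1/m - (1 + 1 / (2 * m) - 3 / (8 * m ^ 2) + 3 / (16 * m ^ 3)) = (8*m^2 + 6*m - 3)/(16*m^3)) by (field; lra).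
  assert (0 <= (8*m^2 + 6*m - 3)/(16*m^3)).
  { apply Rdiv_le_0_compat. nra. apply Rmult_lt_0_compat; [lra|apply pow_lt; lra]. }
  lra. Qed.

Lemma sR_ge1 m : 1 <= m -> 1 <= sR m.
Proof. intro Hm. unfold sR. pose proof (rR_ge1 m Hm).
  assert (0 < 3 / (128 * m ^ 4)) by (apply Rdiv_lt_0_compat; [lra| apply Rmult_lt_0_compat; [lra|apply pow_lt; lra]]).
  lra. Qed.

Lemma cc_eq k : cc (S k) / cc k = ((INR k + 3)/(INR k + 2)) / ((INR k + 2)/(INR k + 1)).
Proof. unfold cc. rewrite S_INR. f_equal; f_equal; ring. Qed.

Lemma INR_SS k : INR (S (S k)) = INR k + 2.
Proof. rewrite !S_INR; ring. Qed.

Lemma Rn_le_cc m : Rn m <= 1 + 1 / (INR m + 1).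
Proof. pose proof (Rn_mul m). pose proof (Rn_ge1 (S m)). pose proof (Rn_pos m).
  assert (Rn m <= cc m) by nra. unfold cc in *. pose proof (pos_INR m).
  replace (1 + 1 / (INR m + 1)) with ((INR m + 2) / (INR m + 1)) by (field; lra). lra. Qed.

Lemma upper n : (1 <= n)%nat -> Rn n < sR (INR n).
Proof.
  intro Hn. apply Rnot_le_lt. intro Hc.
  assert (Hm : 1 <= INR n) by (apply (le_INR 1); auto).
  assert (Hstep : forall k, (1 <= k)%nat -> forall K, 0 < K -> K * sR (INR k) <= Rn k ->
                  K * sR (INR (S (S k))) < Rn (S (S k))).
  { intros k Hk K HK Hle. rewrite Rn_step, cc_eq. rewrite INR_SS.
    assert (Hk' : 1 <= INR k) by (apply (le_INR 1); auto).
    pose proof (PU _ Hk'). pose proof (sR_ge1 _ Hk').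
    assert (Hq : 0 < ((INR k + 3) / (INR k + 2)) / ((INR k + 2) / (INR k + 1))).
    { apply Rdiv_lt_0_compat; apply Rdiv_lt_0_compat; lra. }
    apply Rlt_le_trans with (K * sR (INR k) * (((INR k + 3) / (INR k + 2)) / ((INR k + 2) / (INR k + 1)))).
    - assert (sR (INR k + 2) < sR (INR k) * ((INR k + 3) / (INR k + 2) / ((INR k + 2) / (INR k + 1)))).
      { apply (Rmult_lt_reg_l ((INR k + 2) / (INR k + 1))). apply Rdiv_lt_0_compat; lra.
        replace ((INR k + 2) / (INR k + 1) * (sR (INR k) * ((INR k + 3) / (INR k + 2) / ((INR k + 2) / (INR k + 1)))))
          with ((INR k + 3) / (INR k + 2) * sR (INR k)) by (field; lra). lra. }
      nra.
    - apply Rmult_le_compat_r; lra. }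
  set (K := Rn (S (S n)) / sR (INR (S (S n)))).
  assert (HsSS : 1 <= sR (INR (S (S n)))) by (apply sR_ge1; rewrite INR_SS; lra).
  assert (HK1 : 1 < K).
  { unfold K. apply (Rmult_lt_reg_r (sR (INR (S (S n))))). lra.
    unfold Rdiv. rewrite Rmult_assoc, Rinv_l, Rmult_1_r by lra. rewrite Rmult_1_l.
    replace (sR (INR (S (S n)))) with (1 * sR (INR (S (S n)))) by ring.
    apply Hstep; auto; lra. }
  assert (Hind : forall k, K * sR (INR (S (S n) + 2 * k)) <= Rn (S (S n) + 2 * k)).
  { induction k.
    - replace (S (S n) + 2 * 0)%nat with (S (S n)) by lia. unfold K. right. field. lra.
    - replace (S (S n) + 2 * S k)%nat with (S (S (S (S n) + 2 * k))) by lia.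
      left. apply Hstep; auto. lia. lra. }
  destruct (archimed_cor1 (K - 1) ltac:(lra)) as [N [HN HN0]].
  set (m := (S (S n) + 2 * N)%nat).
  specialize (Hind N). fold m in Hind.
  assert (HmN : INR N <= INR m) by (apply le_INR; unfold m; lia).
  assert (HN1 : 0 < INR N) by (apply (lt_INR 0); auto).
  assert (Hsm : 1 <= sR (INR m)) by (apply sR_ge1; apply (le_INR 1); unfold m; lia).
  pose proof (Rn_le_cc m).
  assert (1 / (INR m + 1) < / INR N).
  { unfold Rdiv; rewrite Rmult_1_l. apply Rinv_lt_contravar; nra. }
  nra.
Qed.

Lemma lower n : (6 <= n)%nat -> rR (INR n) < Rn n.
Proof.
  intro Hn. apply Rnot_le_lt. intro Hc.
  assert (Hstep : forall k, (6 <= k)%nat -> forall K, 0 < K -> Rn k <= K * rR (INR k) ->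
                  Rn (S (S k)) <= K * rR (INR (S (S k))) /\
                  ((6 < INR k) -> Rn (S (S k)) < K * rR (INR (S (S k))))).
  { intros k Hk K HK Hle. rewrite Rn_step, cc_eq. rewrite INR_SS.
    assert (Hk' : 6 <= INR k) by (replace 6 with (INR 6) by (simpl; ring); apply le_INR; auto).
    pose proof (PL _ Hk'). pose proof (rR_ge1 (INR k) ltac:(lra)).
    set (q := ((INR k + 3) / (INR k + 2)) / ((INR k + 2) / (INR k + 1))).
    assert (Hq : 0 < q).
    { apply Rdiv_lt_0_compat; apply Rdiv_lt_0_compat; lra. }
    assert (Hq2 : rR (INR k) * q <= rR (INR k + 2)).
    { apply (Rmult_le_reg_l ((INR k + 2) / (INR k + 1))). apply Rdiv_lt_0_compat; lra.
      unfold q. replace ((INR k + 2) / (INR k + 1) * (rR (INR k) * ((INR k + 3) / (INR k + 2) / ((INR k + 2) / (INR k + 1)))))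
          with ((INR k + 3) / (INR k + 2) * rR (INR k)) by (field; lra). lra. }
    fold q.
    split.
    - assert (Rn k * q <= K * rR (INR k) * q) by (apply Rmult_le_compat_r; lra).
      unfold q in *. nra.
    - intro H6. pose proof (PL' _ H6).
      assert (Hq3 : rR (INR k) * q < rR (INR k + 2)).
      { apply (Rmult_lt_reg_l ((INR k + 2) / (INR k + 1))). apply Rdiv_lt_0_compat; lra.
        unfold q. replace ((INR k + 2) / (INR k + 1) * (rR (INR k) * ((INR k + 3) / (INR k + 2) / ((INR k + 2) / (INR k + 1)))))
          with ((INR k + 3) / (INR k + 2) * rR (INR k)) by (field; lra). lra. }
      assert (Rn k * q <= K * rR (INR k) * q) by (apply Rmult_le_compat_r; lra).
      unfold q in *. nra. }
  assert (H6n : forall k, (6 <= k)%nat -> 6 <= INR k) by (intros k Hk; replace 6 with (INR 6) by (simpl; ring); apply le_INR; auto).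
  assert (H1 : Rn (S (S n)) <= 1 * rR (INR (S (S n)))).
  { apply (Hstep n Hn 1 ltac:(lra)). lra. }
  set (n' := S (S n)) in *.
  assert (Hn' : (6 <= n')%nat) by (unfold n'; lia).
  assert (Hn'6 : 6 < INR n') by (unfold n'; rewrite INR_SS; pose proof (H6n n Hn); lra).
  assert (H2 : Rn (S (S n')) < 1 * rR (INR (S (S n')))) by (apply (Hstep n' Hn' 1 ltac:(lra)); auto).
  assert (Hr2 : 1 <= rR (INR (S (S n')))) by (apply rR_ge1; pose proof (H6n (S (S n')) ltac:(lia)); lra).
  set (K := Rn (S (S n')) / rR (INR (S (S n')))).
  pose proof (Rn_pos (S (S n'))).
  assert (HK0 : 0 < K) by (unfold K; apply Rdiv_lt_0_compat; lra).
  assert (HK1 : K < 1).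
  { unfold K. apply (Rmult_lt_reg_r (rR (INR (S (S n'))))). lra.
    unfold Rdiv. rewrite Rmult_assoc, Rinv_l, Rmult_1_r by lra. lra. }
  assert (Hind : forall k, Rn (S (S n') + 2 * k) <= K * rR (INR (S (S n') + 2 * k))).
  { induction k.
    - replace (S (S n') + 2 * 0)%nat with (S (S n')) by lia. unfold K. right. field. lra.
    - replace (S (S n') + 2 * S k)%nat with (S (S (S (S n') + 2 * k))) by lia.
      apply (Hstep (S (S n') + 2 * k)%nat ltac:(lia) K HK0 IHk). }
  destruct (archimed_cor1 (1 - K) ltac:(lra)) as [N [HN HN0]].
  set (m := (S (S n') + 2 * N)%nat).
  specialize (Hind N). fold m in Hind.
  assert (HmN : INR N <= INR m) by (apply le_INR; unfold m; lia).
  assert (HN1 : 0 < INR N) by (apply (lt_INR 0); auto).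
  assert (Hm1 : 1 <= INR m) by (apply (le_INR 1); unfold m; lia).
  pose proof (rR_le _ Hm1). pose proof (Rn_ge1 m).
  assert (1 / INR m <= / INR N).
  { unfold Rdiv; rewrite Rmult_1_l. apply Rinv_le_contravar; lra. }
  assert (K * rR (INR m) <= K * (1 + 1 / INR m)) by (apply Rmult_le_compat_l; lra).
  assert (K * (1 / INR m) <= 1 / INR m) by (pose proof (Rdiv_lt_0_compat 1 (INR m) ltac:(lra) ltac:(lra)); nra).
  nra.
Qed.

Theorem theorem16 :
  (forall n : nat, (6 <= n)%nat -> r_fun n < omega_ratio n) /\
  (forall n : nat, (1 <= n)%nat -> omega_ratio n < s_fun n).
Proof.
  split; intros n Hn.
  - rewrite omega_Rn by lia. apply (lower n Hn).
  - rewrite omega_Rn by lia. apply (upper n Hn).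
Qed.
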